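(* For every language L_1 ∈ GRLOWJ there exists a language L_2 ∈ GLLOWJ such that L_1^R = L_2, and vice versa (for every L_2 ∈ GLLOWJ there exists L_1 ∈ GRLOWJ with L_2^R = L_1).
   Context: For a word w = a_1⋯a_n, w^R = a_n⋯a_1, and L^R = {w^R : w ∈ L}. A generalized right linear one-way jumping finite automaton (GRLOWJFA) is a tuple A = (Σ, Q, q_0, F, R) with alphabet Σ, finite state set Q, start state q_0, final states F ⊆ Q, and a finite set of rules R ⊂ Q × Σ^+ × Q such that for each p ∈ Q and w ∈ Σ^+ there is at most one q with (p,w,q) ∈ R (rule (p,w,q): from p, delete w, go to q). For p ∈ Q let Σ_p = {w ∈ Σ^+ : (p,w,q) ∈ R for some q}. Configurations are strings in Σ^* Q Σ^*, with moves: (1) for t,u,v ∈ Σ^* and (p,x,q) ∈ R, tpuxv ⇒ tuqv, provided u contains no word of Σ_p as a subword and there is no nonempty suffix u_2 of u and nonempty prefix x_1 of x with u_2x_1 = x; (2) for x ∈ Σ^+ and y ∈ Σ^* such that y contains no word of Σ_p as a subword, xpy ⇒ pxy. Accepted language: {w ∈ Σ^* : q_0 w ⇒^* q_f for some q_f ∈ F}. A generalized left linear one-way jumping finite automaton (GLLOWJFA) is a tuple A = (Σ, Q, q_0, F, R) with R ⊂ Q × Σ^+ × Q finite; a rule (q,w,p) means from p, delete w, go to q, and for each p and w there is at most one such q. For p ∈ Q let Σ_p = {w ∈ Σ^+ : (q,w,p) ∈ R for some q}. Configurations are strings in Σ^* Q Σ^*, with moves: (1) for t,u,v ∈ Σ^*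 and (q,x,p) ∈ R, vxupt moves to vqut, provided u contains no word of Σ_p as a subword and there is no nonempty prefix u_1 of u and nonempty suffix x_2 of x with x_2u_1 = x; (2) for x ∈ Σ^+ and y ∈ Σ^* such that y contains no word of Σ_p as a subword, ypx moves to yxp. Accepted language: {w ∈ Σ^* : w q_0 leads in zero or more moves to q_f for some q_f ∈ F}. GRLOWJ and GLLOWJ denote the classes of languages accepted by GRLOWJFA and GLLOWJFA respectively. *)

(* Defs.v *)
From mathcomp Require Import all_boot.
Set Implicit Arguments. Unset Strict Implicit. Unset Printing Implicit Defensive.

(* Words over a finite alphabet Sigma are [seq Sigma]; a language is a
   predicate on words.  "Subword" means factor (contiguous), i.e. [infix]. *)

Definition language (Sigma : finType) := seq Sigma -> Prop.

Definition lang_rev (Sigma : finType) (L : language Sigma) : language Sigma :=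
  fun w => L (rev w).

Inductive star (C : Type) (step : C -> C -> Prop) : C -> C -> Prop :=
| star_refl c : star step c c
| star_step c1 c2 c3 : step c1 c2 -> star step c2 c3 -> star step c1 c3.

Record gowjfa (Sigma : finType) := GOWJFA {
  state : finType;
  start : state;
  final : pred state;
  rules : seq (state * seq Sigma * state);
  rules_nonempty : forall p w q, (p, w, q) \in rules -> w != [::];
}.

Definition config (Sigma : finType) (A : gowjfa Sigma) :=
  (seq Sigma * state A * seq Sigma)%type.

(* rule (p,w,q): from p, delete w, go to q; deterministic in (p,w) *)
Definition R_deterministic (Sigma : finType) (A : gowjfa Sigma) : Prop :=
  forall p w q1 q2, (p, w, q1) \in rules A -> (p, w, q2) \in rules A -> q1 = q2.

Definition R_Sigma_p (Sigma : finType) (A : gowjfa Sigma) (p : state A)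
  (w : seq Sigma) : Prop := exists q, (p, w, q) \in rules A.

Inductive R_step (Sigma : finType) (A : gowjfa Sigma) : config A -> config A -> Prop :=
| R_step_rule (t u x v : seq Sigma) (p q : state A) :
    (p, x, q) \in rules A ->
    (forall w, R_Sigma_p p w -> ~~ infix w u) ->
    ~ (exists u2 x1, u2 != [::] /\ x1 != [::] /\ suffix u2 u /\ prefix x1 x
                     /\ u2 ++ x1 = x) ->
    R_step (t, p, u ++ x ++ v) (t ++ u, q, v)
| R_step_jump (x y : seq Sigma) (p : state A) :
    x != [::] ->
    (forall w, R_Sigma_p p w -> ~~ infix w y) ->
    R_step (x, p, y) ([::], p, x ++ y).

Definition R_accepts (Sigma : finType) (A : gowjfa Sigma) (w : seq Sigma) : Prop :=
  exists qf : state A, @final Sigma A qf /\ star (@R_step Sigma A) ([::], @start Sigma A, w) ([::], qf, [::]).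

Definition GRLOWJ (Sigma : finType) (L : language Sigma) : Prop :=
  exists A : gowjfa Sigma, R_deterministic A /\
    forall w, L w <-> R_accepts A w.

(* rule (q,w,p): from p, delete w, go to q; deterministic in (p,w) *)
Definition L_deterministic (Sigma : finType) (A : gowjfa Sigma) : Prop :=
  forall p w q1 q2, (q1, w, p) \in rules A -> (q2, w, p) \in rules A -> q1 = q2.

Definition L_Sigma_p (Sigma : finType) (A : gowjfa Sigma) (p : state A)
  (w : seq Sigma) : Prop := exists q, (q, w, p) \in rules A.

Inductive L_step (Sigma : finType) (A : gowjfa Sigma) : config A -> config A -> Prop :=
| L_step_rule (t u x v : seq Sigma) (p q : state A) :
    (q, x, p) \in rules A ->
    (forall w, L_Sigma_p p w -> ~~ infix w u) ->
    ~ (exists u1 x2, u1 != [::] /\ x2 != [::] /\ prefix u1 u /\ suffix x2 x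
                     /\ x2 ++ u1 = x) ->
    L_step (v ++ x ++ u, p, t) (v, q, u ++ t)
| L_step_jump (x y : seq Sigma) (p : state A) :
    x != [::] ->
    (forall w, L_Sigma_p p w -> ~~ infix w y) ->
    L_step (y, p, x) (y ++ x, p, [::]).

Definition L_accepts (Sigma : finType) (A : gowjfa Sigma) (w : seq Sigma) : Prop :=
  exists qf : state A, @final Sigma A qf /\ star (@L_step Sigma A) (w, @start Sigma A, [::]) ([::], qf, [::]).

Definition GLLOWJ (Sigma : finType) (L : language Sigma) : Prop :=
  exists A : gowjfa Sigma, L_deterministic A /\
    forall w, L w <-> L_accepts A w.

(* Main.v *)
Require Import Defs.
From mathcomp Require Import all_boot.
Set Implicit Arguments. Unset Strict Implicit. Unset Printing Implicit Defensive.

Definition mir (Sigma : Type) (S : Type) (r : S * seq Sigma * S) : S * seq Sigma * S :=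
  (r.2, rev r.1.2, r.1.1).

Lemma mirK (Sigma : Type) (S : Type) : involutive (@mir Sigma S).
Proof. by case=> [[x y] z]; rewrite /mir /= revK. Qed.

Lemma mem_mir (Sigma S : eqType) (a : S) (w : seq Sigma) b (s : seq (S * seq Sigma * S)) :
  ((a, w, b) \in map (@mir Sigma S) s) = ((b, rev w, a) \in s).
Proof.
have -> : (a, w, b) = mir (b, rev w, a) by rewrite /mir /= revK.
by rewrite mem_map //; exact: inv_inj (@mirK Sigma S).
Qed.

Definition mirror (Sigma : finType) (A : gowjfa Sigma) : gowjfa Sigma.
Proof.
refine (@GOWJFA Sigma (state A) (start A) (@final _ A) (map (@mir Sigma (state A)) (rules A)) _).
move=> p w q; rewrite mem_mir => H.
have := rules_nonempty H; apply: contra => /eqP ->; by [].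
Defined.

Definition fc (Sigma S : Type) (c : seq Sigma * S * seq Sigma) : seq Sigma * S * seq Sigma :=
  (rev c.2, c.1.2, rev c.1.1).

Lemma star_map (C : Type) (r1 r2 : C -> C -> Prop) (f : C -> C) :
  (forall c c', r1 c c' -> r2 (f c) (f c')) ->
  forall c c', star r1 c c' -> star r2 (f c) (f c').
Proof.
move=> H c c'; elim=> [x|x y z Hxy _ IH]; first exact: star_refl.
exact: star_step (H _ _ Hxy) IH.
Qed.

Lemma revne (Sigma : eqType) (x : seq Sigma) : x != [::] -> rev x != [::].
Proof. by rewrite -!size_eq0 size_rev. Qed.

Section S.
Variable Sigma : finType.
Variable A : gowjfa Sigma.

Lemma lem1 (c c' : config A) : R_step c c' -> @L_step Sigma (mirror A) (fc c) (fc c').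
Proof.
case=> [t u x v p q Hr Hs Ho | x y p Hx Hs].
- rewrite /fc /= !rev_cat -catA. apply: L_step_rule.
  + by rewrite /= mem_mir revK.
  + move=> w [q' Hq']; rewrite /= mem_mir in Hq'.
    rewrite -infix_rev revK. exact: Hs (ex_intro _ q' Hq').
  + move=> [u1 [x2 [H1 [H2 [H3 [H4 H5]]]]]]; apply: Ho; exists (rev u1), (rev x2).
    do !split; first exact: revne; first exact: revne.
    * by rewrite suffix_revLR.
    * by rewrite prefix_revLR.
    * by rewrite -rev_cat H5 revK.
- rewrite /fc /= rev_cat. apply: L_step_jump; first exact: revne.
  move=> w [q' Hq']; rewrite /= mem_mir in Hq'.
  rewrite -infix_rev revK. exact: Hs (ex_intro _ q' Hq').
Qed.

Lemma lem1' (c c' : config (mirror A)) : L_step c c' -> @R_step Sigma A (fc c) (fc c').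
Proof.
case=> [t u x v p q Hr Hs Ho | x y p Hx Hs].
- rewrite /fc /= !rev_cat -catA. apply: R_step_rule.
  + by rewrite /= mem_mir in Hr.
  + move=> w [q' Hq'].
    rewrite -infix_rev revK. apply: Hs; exists q'; by rewrite /= mem_mir revK.
  + move=> [u1 [x2 [H1 [H2 [H3 [H4 H5]]]]]]; apply: Ho; exists (rev u1), (rev x2).
    do !split; first exact: revne; first exact: revne.
    * by rewrite prefix_revLR.
    * by rewrite suffix_revLR.
    * by rewrite -rev_cat H5 revK.
- rewrite /fc /= rev_cat. apply: R_step_jump; first exact: revne.
  move=> w [q' Hq'].
  rewrite -infix_rev revK. apply: Hs; exists q'; by rewrite /= mem_mir revK.
Qed.

Lemma lem2 (c c' : config A) : L_step c c' -> @R_step Sigma (mirror A) (fc c) (fc c').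
Proof.
case=> [t u x v p q Hr Hs Ho | x y p Hx Hs].
- rewrite /fc /= !rev_cat -catA. apply: R_step_rule.
  + by rewrite /= mem_mir revK.
  + move=> w [q' Hq']; rewrite /= mem_mir in Hq'.
    rewrite -infix_rev revK. exact: Hs (ex_intro _ q' Hq').
  + move=> [u1 [x2 [H1 [H2 [H3 [H4 H5]]]]]]; apply: Ho; exists (rev u1), (rev x2).
    do !split; first exact: revne; first exact: revne.
    * by rewrite prefix_revLR.
    * by rewrite suffix_revLR.
    * by rewrite -rev_cat H5 revK.
- rewrite /fc /= rev_cat. apply: R_step_jump; first exact: revne.
  move=> w [q' Hq']; rewrite /= mem_mir in Hq'.
  rewrite -infix_rev revK. exact: Hs (ex_intro _ q' Hq').
Qed.

Lemma lem2' (c c' : config (mirror A)) : R_step c c' -> @L_step Sigma A (fc c) (fc c').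
Proof.
case=> [t u x v p q Hr Hs Ho | x y p Hx Hs].
- rewrite /fc /= !rev_cat -catA. apply: L_step_rule.
  + by rewrite /= mem_mir in Hr.
  + move=> w [q' Hq'].
    rewrite -infix_rev revK. apply: Hs; exists q'; by rewrite /= mem_mir revK.
  + move=> [u1 [x2 [H1 [H2 [H3 [H4 H5]]]]]]; apply: Ho; exists (rev u1), (rev x2).
    do !split; first exact: revne; first exact: revne.
    * by rewrite suffix_revLR.
    * by rewrite prefix_revLR.
    * by rewrite -rev_cat H5 revK.
- rewrite /fc /= rev_cat. apply: L_step_jump; first exact: revne.
  move=> w [q' Hq'].
  rewrite -infix_rev revK. apply: Hs; exists q'; by rewrite /= mem_mir revK.
Qed.

End S.

Theorem proposition1 (Sigma : finType) :
  (forall L1 : language Sigma, GRLOWJ L1 ->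
     exists L2 : language Sigma, GLLOWJ L2 /\ forall w, lang_rev L1 w <-> L2 w) /\
  (forall L2 : language Sigma, GLLOWJ L2 ->
     exists L1 : language Sigma, GRLOWJ L1 /\ forall w, lang_rev L2 w <-> L1 w).
Proof.
split.
- move=> L1 [A [Hdet HL]]; exists (L_accepts (mirror A)); split.
    exists (mirror A); split=> //.
    move=> p w q1 q2; rewrite /= !mem_mir => H1 H2; exact: Hdet H1 H2.
  move=> w; rewrite /lang_rev; apply: iff_trans (HL _) _; split=> [[qf [Hf Hs]]|[qf [Hf Hs]]]; exists qf; split=> //.
  + by move: (star_map (@lem1 _ A) Hs); rewrite /fc /= revK.
  + by move: (star_map (@lem1' _ A) Hs); rewrite /fc /=.
- move=> L2 [A [Hdet HL]]; exists (R_accepts (mirror A)); split.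
    exists (mirror A); split=> //.
    move=> p w q1 q2; rewrite /= !mem_mir => H1 H2; exact: Hdet H1 H2.
  move=> w; rewrite /lang_rev; apply: iff_trans (HL _) _; split=> [[qf [Hf Hs]]|[qf [Hf Hs]]]; exists qf; split=> //.
  + by move: (star_map (@lem2 _ A) Hs); rewrite /fc /= revK.
  + by move: (star_map (@lem2' _ A) Hs); rewrite /fc /=.
Qed.
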